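(* Let $\mathbf A$ be a finite Cornish algebra of type $F$ and let $\mathbb X=D(\mathbf A)$. Then the following are equivalent: (1) $\mathbf A$ is semi-primal; (2) for each Cornish space $\mathbb Y$ of type $F$ and jointly surjective morphisms $\phi_1,\phi_2\colon\mathbb X\to\mathbb Y$, either $\mathbb Y=\mathbb Y_1\,\dot\cup\,\mathbb Y_2$ where $\mathbb Y_i:=\phi_i(\mathbb X)$, or $\phi_1=\phi_2$; (3) $\mathbb X$ has no non-empty proper substructures and, for each Cornish space $\mathbb Y$ of type $F$ and jointly surjective morphisms $\phi_1,\phi_2\colon\mathbb X\to\mathbb Y$, if $\phi_1(a)$ and $\phi_2(b)$ are comparable for some $a,b\in X$, then there exists $c\in X$ with $\phi_1(c)=\phi_2(c)$.
   Context: $F=F^+\,\dot\cup\,F^-$ is a set of unary operation symbols. A Cornish algebra of type $F$: a bounded distributive lattice with unary operations $f^{\mathbf A}$ ($f\in F$), an endomorphism for $f\in F^+$ and a dual endomorphism for $f\in F^-$. A Cornish space of type $F$: a Priestley space with unary operations $f^{\mathbb X}$ that are continuous order-preserving for $f\in F^+$ and continuous order-reversing for $f\in F^-$; morphisms are continuous order-preserving maps commuting with each $f$. A substructure is a closed subset closed under all $f^{\mathbb X}$. $D(\mathbf A)$: the set of bounded-lattice homomorphisms from the lattice reduct of $\mathbf A$ to $\mathbf 2$, ordered pointwise, topology from $\{0,1\}^A$, with $f^{D(\mathbf A)}(x)=x\circ f^{\mathbf A}$ for $f\in F^+$ and $c\circ x\circ f^{\mathbf A}$ for $f\in F^-$ ($c$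 Boolean complement). $\phi(\mathbb X)$ is the substructure on $\phi(X)$. Jointly surjective: $\phi_1(X)\cup\phi_2(X)=Y$. $\mathbb Y=\mathbb Y_1\,\dot\cup\,\mathbb Y_2$: $Y_1,Y_2$ disjoint, covering $Y$, with no element of $Y_1$ comparable to one of $Y_2$. A finite algebra $\mathbf A$ is semi-primal if it has a majority term and every subalgebra of $\mathbf A^2$ is either a product of two subalgebras of $\mathbf A$ or the graph of the identity map on a subalgebra of $\mathbf A$. *)

(* Defs.v *)
From HB Require Import structures.
From mathcomp Require Import all_boot all_order.
From mathcomp Require Import boolp classical_sets topology_structure.
From mathcomp Require Import compact subspace_topology subtype_topology function_spaces bool_topology.

Set Implicit Arguments.
Unset Strict Implicit.
Unset Printing Implicit Defensive.

Local Open Scope classical_set_scope.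

(** * Cornish algebras of type F = F^+ ⊔ F^-.
    The type of operation symbols is [F]; [sgn f = true] means f ∈ F^+,
    [sgn f = false] means f ∈ F^-. *)

Section CornishAlgebra.
Context {d : Order.disp_t} (A : finTBDistrLatticeType d) (F : Type) (sgn : F -> bool).

Definition cornish_alg (fA : F -> A -> A) : Prop :=
  forall f : F,
    if sgn f then
      [/\ forall a b, fA f (Order.meet a b) = Order.meet (fA f a) (fA f b),
          forall a b, fA f (Order.join a b) = Order.join (fA f a) (fA f b),
          fA f Order.top = Order.top & fA f Order.bottom = Order.bottom]
    else
      [/\ forall a b, fA f (Order.meet a b) = Order.join (fA f a) (fA f b),
          forall a b, fA f (Order.join a b) = Order.meet (fA f a) (fA f b),
          fA f Order.top = Order.bottom & fA f Order.bottom = Order.top].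

Inductive term : Type :=
  | tVar of nat
  | tTop
  | tBot
  | tMeet of term & term
  | tJoin of term & term
  | tOp of F & term.

Fixpoint eval_term (fA : F -> A -> A) (env : nat -> A) (t : term) : A :=
  match t with
  | tVar i => env i
  | tTop => Order.top
  | tBot => Order.bottom
  | tMeet t1 t2 => Order.meet (eval_term fA env t1) (eval_term fA env t2)
  | tJoin t1 t2 => Order.join (eval_term fA env t1) (eval_term fA env t2)
  | tOp f t1 => fA f (eval_term fA env t1)
  end.

Definition env3 (a b c : A) : nat -> A :=
  fun i => match i with 0 => a | 1 => b | _ => c end.

Definition has_majority_term (fA : F -> A -> A) : Prop :=
  exists t : term, forall x y : A,
    [/\ eval_term fA (env3 x x y) t = x,
        eval_term fA (env3 x y x) t = x &
        eval_term fA (env3 y x x) t = x].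

Definition is_subalg (fA : F -> A -> A) (B : {set A}) : Prop :=
  [/\ Order.top \in B, Order.bottom \in B,
      forall a b, a \in B -> b \in B -> Order.meet a b \in B,
      forall a b, a \in B -> b \in B -> Order.join a b \in B &
      forall f a, a \in B -> fA f a \in B].

Definition is_subalg2 (fA : F -> A -> A) (S : {set A * A}) : Prop :=
  [/\ (Order.top, Order.top) \in S, (Order.bottom, Order.bottom) \in S,
      forall p q, p \in S -> q \in S ->
        (Order.meet p.1 q.1, Order.meet p.2 q.2) \in S,
      forall p q, p \in S -> q \in S ->
        (Order.join p.1 q.1, Order.join p.2 q.2) \in S &
      forall f p, p \in S -> (fA f p.1, fA f p.2) \in S].

Definition semi_primal (fA : F -> A -> A) : Prop :=
  has_majority_term fA /\
  forall S : {set A * A}, is_subalg2 fA S ->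
    (exists B C : {set A}, [/\ is_subalg fA B, is_subalg fA C & S = finset.setX B C])
    \/ (exists B : {set A}, is_subalg fA B /\ S = [set (b, b) | b in B]%SET).

(** Bounded-lattice homomorphisms A -> 2, as points of {0,1}^A (product
    topology, {0,1} discrete). *)
Definition is_lat_hom (x : A -> bool) : Prop :=
  [/\ x Order.top = true, x Order.bottom = false,
      forall a b, x (Order.meet a b) = x a && x b &
      forall a b, x (Order.join a b) = x a || x b].

Definition D_set : set {ptws A -> bool} := [set x | is_lat_hom x].

Definition D_space : topologicalType := set_type D_set.

Definition D_le (x y : D_space) : Prop :=
  forall a : A, proj1_sig x a -> proj1_sig y a.

Definition D_op_fun (fA : F -> A -> A) (f : F) (x : A -> bool) : A -> bool :=
  if sgn f then (fun a => x (fA f a)) else (fun a => ~~ x (fA f a)).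

Lemma D_op_hom (fA : F -> A -> A) (HA : cornish_alg fA) (f : F) (x : A -> bool) :
  is_lat_hom x -> is_lat_hom (D_op_fun fA f x).
Proof.
move=> [xT xB xM xJ]; rewrite /D_op_fun; have := HA f.
case: (sgn f) => -[fM fJ fT fB]; split.
- by rewrite fT.
- by rewrite fB.
- by move=> a b; rewrite fM xM.
- by move=> a b; rewrite fJ xJ.
- by rewrite fT xB.
- by rewrite fB xT.
- by move=> a b; rewrite fM xJ negb_or.
- by move=> a b; rewrite fJ xM negb_and.
Qed.

Definition D_op (fA : F -> A -> A) (HA : cornish_alg fA) (f : F) (x : D_space)
  : D_space :=
  @exist _ (fun y => y \in D_set) (D_op_fun fA f (proj1_sig x))
    (mem_set (D_op_hom HA f (set_mem (proj2_sig x)))).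

End CornishAlgebra.

Section CornishSpace.
Context (F : Type) (sgn : F -> bool).

Definition partial_order {Y : Type} (le : Y -> Y -> Prop) : Prop :=
  [/\ forall x, le x x,
      forall x y z, le x y -> le y z -> le x z &
      forall x y, le x y -> le y x -> x = y].

Definition up_set {Y : Type} (le : Y -> Y -> Prop) (U : set Y) : Prop :=
  forall u v, U u -> le u v -> U v.

Definition priestley_space (Y : topologicalType) (le : Y -> Y -> Prop) : Prop :=
  [/\ partial_order le, compact [set: Y] &
      forall x y, ~ le x y ->
        exists U : set Y, [/\ open U, closed U, up_set le U, U x & ~ U y]].

Definition cornish_space (Y : topologicalType) (le : Y -> Y -> Prop)
  (fY : F -> Y -> Y) : Prop :=
  priestley_space le /\
  forall f : F, continuous (fY f) /\
    (if sgn f then forall u v, le u v -> le (fY f u) (fY f v)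
     else forall u v, le u v -> le (fY f v) (fY f u)).

Definition cornish_morphism (X Y : topologicalType)
  (leX : X -> X -> Prop) (fX : F -> X -> X)
  (leY : Y -> Y -> Prop) (fY : F -> Y -> Y) (phi : X -> Y) : Prop :=
  [/\ continuous phi,
      forall u v, leX u v -> leY (phi u) (phi v) &
      forall f u, phi (fX f u) = fY f (phi u)].

Definition substructure (X : topologicalType) (fX : F -> X -> X) (S : set X) : Prop :=
  closed S /\ forall f x, S x -> S (fX f x).

Definition jointly_surjective {X Y : Type} (phi1 phi2 : X -> Y) : Prop :=
  phi1 @` setT `|` phi2 @` setT = setT.

Definition order_disjoint_union {Y : Type} (le : Y -> Y -> Prop)
  (Y1 Y2 : set Y) : Prop :=
  [/\ Y1 `&` Y2 = set0, Y1 `|` Y2 = setT &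
      forall y1 y2, Y1 y1 -> Y2 y2 -> ~ le y1 y2 /\ ~ le y2 y1].

Definition order_comparable {Y : Type} (le : Y -> Y -> Prop) (u v : Y) : Prop :=
  le u v \/ le v u.

End CornishSpace.

(* Main.v *)
Require Import Defs.
From HB Require Import structures.
From mathcomp Require Import all_boot all_order.
From mathcomp Require Import boolp classical_sets topology_structure.
From mathcomp Require Import compact subspace_topology subtype_topology function_spaces bool_topology.
From mathcomp Require Import discrete_topology filter cardinality.
Import Order.TTheory.

Section Lat.
Context {d : Order.disp_t} (A : finTBDistrLatticeType d).
Local Open Scope order_scope.

Lemma prime_filter (a b : A) : ~~ (a <= b) ->
  exists x : A -> bool, is_lat_hom x /\ x a /\ ~~ x b.
Proof.
move=> nab.
pose P := [pred c : A | (c <= a) && ~~ (c <= b)].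
have Pa : P a by rewrite /P /= lexx.
pose cnt (c : A) := #|[pred e : A | e < c]|.
case: (arg_minnP cnt Pa) => j /andP[ja njb] jmin.
have small : forall c, c < j -> c <= b.
  move=> c cj; apply: contraT => ncb.
  have Pc : P c by rewrite /P /= ncb andbT (le_trans (ltW cj) ja).
  have := jmin c Pc; rewrite /cnt.
  suff : #|[pred e : A | e < c]| < #|[pred e : A | e < j]| by move=> lt h; have := leq_ltn_trans h lt; rewrite ltnn.
  apply: proper_card; apply/properP; split.
    by apply/fintype.subsetP => e; rewrite !inE => ec; apply: lt_trans ec cj.
  by exists c; rewrite !inE ?ltxx.
exists (fun c => j <= c); split; last by rewrite ja.
split.
- exact: lex1.
- apply: contraNF njb => j0; apply: le_trans j0 _; exact: le0x.
- by move=> u v; rewrite lexI.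
- move=> u v; apply/idP/idP; last first.
    by case/orP => H; [apply: lexUl|apply: lexUr].
  move=> juv.
  have e : j = Order.join (Order.meet j u) (Order.meet j v).
    by rewrite -meetUr; apply/esym/meet_idPl.
  case: (boolP (j <= u)) => //= nju; apply: contraT => njv.
  have l1 : Order.meet j u < j.
    by rewrite lt_neqAle leIl andbT; apply: contraNneq nju => <-; exact: leIr.
  have l2 : Order.meet j v < j.
    by rewrite lt_neqAle leIl andbT; apply: contraNneq njv => <-; exact: leIr.
  move: njb; rewrite e leUx.
  by rewrite (small _ l1) (small _ l2).
Qed.

Lemma sep_eq (a b : A) :
  (forall x : A -> bool, is_lat_hom x -> x a = x b) -> a = b.
Proof.
move=> H; apply/le_anti/andP; split.
  apply: contraT => /prime_filter [x [hx [xa xb]]].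
  by move: xb; rewrite -(H x hx) xa.
apply: contraT => /prime_filter [x [hx [xb xa]]].
by move: xa; rewrite (H x hx) xb.
Qed.

Lemma sep_top (a : A) : (forall x : A -> bool, is_lat_hom x -> x a) -> a = Order.top.
Proof. by move=> H; apply: sep_eq => x hx; rewrite H //; case: hx. Qed.

Lemma sep_bot (a : A) : (forall x : A -> bool, is_lat_hom x -> ~~ x a) -> a = Order.bottom.
Proof. by move=> H; apply: sep_eq => x hx; rewrite (negbTE (H x hx)); case: hx. Qed.

End Lat.

Local Open Scope classical_set_scope.
Section Rep.
Variables (T : finType) (mt jn : T -> T -> T) (tp bt : T) (S : pred T).
Hypotheses (Stp : S tp) (Sbt : S bt)
  (Smt : forall s t, S s -> S t -> S (mt s t))
  (Sjn : forall s t, S s -> S t -> S (jn s t)).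

Definition homS (g : T -> bool) :=
  [/\ g tp, ~~ g bt, forall s t, S s -> S t -> g (mt s t) = g s && g t &
      forall s t, S s -> S t -> g (jn s t) = g s || g t].

Lemma fold_mt (l : seq T) : all S l ->
  S (foldr mt tp l) /\ forall g, homS g -> g (foldr mt tp l) = all g l.
Proof.
elim: l => [|s l IH] /=; first by split => // g [].
move=> /andP [Ss /IH [Sl Hl]]; split; first exact: Smt.
by move=> g hg; case: (hg) => _ _ hm _; rewrite hm // Hl.
Qed.

Lemma fold_jn (l : seq T) : all S l ->
  S (foldr jn bt l) /\ forall g, homS g -> g (foldr jn bt l) = has g l.
Proof.
elim: l => [|s l IH] /=; first by split => // g [_ /negbTE].
move=> /andP [Ss /IH [Sl Hl]]; split; first exact: Sjn.
by move=> g hg; case: (hg) => _ _ _ hj; rewrite hj // Hl.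
Qed.

Definition mg (g : T -> bool) := foldr mt tp [seq s <- enum T | S s && g s].

Lemma mg_S g : S (mg g) /\ forall h, homS h -> h (mg g) = all h [seq s <- enum T | S s && g s].
Proof. apply: fold_mt _ _; apply/allP => s; rewrite mem_filter => /andP[/andP[]]//. Qed.

Lemma rep (G W : set (T -> bool)) : (forall g, G g -> homS g) -> W `<=` G ->
  (forall g h, W g -> G h -> (forall s, S s -> g s -> h s) -> W h) ->
  exists s, S s /\ forall g, G g -> (g s <-> W g).
Proof.
move=> Ghom WG Wup.
pose l := [seq u <- enum T | `[< exists g, W g /\ u = mg g >]].
have Sl : all S l.
  apply/allP => u; rewrite mem_filter => /andP [/asboolP [g [_ ->]] _].
  by case: (mg_S g).
have [SsW HsW] := fold_jn _ Sl.
exists (foldr jn bt l); split => // g Gg.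
rewrite HsW; last exact: Ghom.
split.
- move=> /hasP [u]; rewrite mem_filter => /andP [/asboolP [h [Wh ->]] _] gh.
  apply: (Wup h g Wh Gg) => s Ss hs.
  case: (mg_S h) => _ /(_ g (Ghom g Gg)); rewrite gh => /esym /allP; apply.
  by rewrite mem_filter Ss hs mem_enum.
- move=> Wg; apply/hasP; exists (mg g).
    by rewrite mem_filter mem_enum andbT; apply/asboolP; exists g.
  case: (mg_S g) => _ ->; last exact: Ghom.
  by apply/allP => s; rewrite mem_filter => /andP [/andP []].
Qed.
End Rep.

Section T.
Context {d : Order.disp_t} (A : finTBDistrLatticeType d).
Lemma ptws_pt_open (c : A -> bool) :
  open ([set g | forall a, g a = c a] : set {ptws A -> bool}).
Proof.
rewrite openE => g /= gc.
rewrite /interior.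
have : \forall h \near (g : {ptws A -> bool}), forall a, h a = g a.
  apply: (@filter_forall _ A (fun a h => h a = g a) (nbhs g) _) => a.

  have := @proj_continuous A (fun _ => bool) a g.
  move=> /(_ [set g a]) /= H.
  apply: H.
  exact: discrete_set1.
apply: filterS => h /= hg a; by rewrite hg gc.
Qed.

Lemma D_open (S : set (D_space A)) : open S.
Proof.
rewrite /open /=.
exists (\bigcup_(x in S) [set g | forall a, g a = sval x a]).
  by apply: bigcup_open => x _; apply: ptws_pt_open.
apply/seteqP; split => y /=.
  move=> [x Sx /= H].
  suff -> : y = x by [].
  apply: val_inj; apply: functional_extensionality_dep => a; exact: H.
by move=> Sy; exists y.
Qed.

Lemma D_closed (S : set (D_space A)) : closed S.
Proof. by rewrite -openC; apply: D_open. Qed.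
End T.

Lemma cont_open (T U : topologicalType) (f : T -> U) (B : set U) :
  continuous f -> open B -> open (f @^-1` B).
Proof. by move/continuousP; apply. Qed.

Lemma cont_closed (T U : topologicalType) (f : T -> U) (B : set U) :
  continuous f -> closed B -> closed (f @^-1` B).
Proof.
move=> cf cB; rewrite -openC preimage_setC; apply: cont_open => //.
by rewrite openC.
Qed.

Section X.
Context {d : Order.disp_t} (A : finTBDistrLatticeType d).
Local Notation X := (D_space A).

Lemma hom_of (x : X) : is_lat_hom (sval x).
Proof. exact: (set_mem (proj2_sig x)). Qed.

Lemma D_le_anti (u v : X) : D_le u v -> D_le v u -> u = v.
Proof.
move=> uv vu; apply: val_inj; apply: functional_extensionality_dep => a.
by apply/idP/idP; [apply: uv|apply: vu].
Qed.

Lemma repX (W : set X) : (forall u v, W u -> D_le u v -> W v) ->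
  exists a, forall z : X, sval z a <-> W z.
Proof.
move=> Wup.
have HG : forall g, [set g | is_lat_hom g] g -> @homS A Order.meet Order.join Order.top Order.bottom predT g.
  move=> g [gT gB gM gJ]; split => //; first by rewrite gB.
have HW : [set g | exists z, W z /\ sval z = g] `<=` [set g | is_lat_hom g].
  by move=> g [z [_ <-]]; exact: hom_of.
have HU : forall g h, [set g | exists z, W z /\ sval z = g] g -> [set g | is_lat_hom g] h ->
   (forall s, predT s -> g s -> h s) -> [set g | exists z, W z /\ sval z = g] h.
  move=> g h [z [Wz <-]] hh zh.
  exists (exist _ h (mem_set hh)); split => //.
  by apply: (Wup z) => // a; apply: zh.
have [s [_ Hs]] := @rep A Order.meet Order.join Order.top Order.bottom predT isT isT
  (fun _ _ _ _ => isT) (fun _ _ _ _ => isT) _ _ HG HW HU.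
exists s => z.
rewrite (Hs _ (hom_of z)); split; first by move=> [z' [Wz' e]]; rewrite -(val_inj e).
by move=> Wz; exists z.
Qed.
End X.
Arguments hom_of {d A}.
Arguments D_le_anti {d A}.
Arguments repX {d A}.

Local Open Scope classical_set_scope.

Section Main.
Context {d : Order.disp_t} (A : finTBDistrLatticeType d) (F : Type) (sgn : F -> bool)
  (fA : F -> A -> A) (HA : cornish_alg sgn fA).
Local Notation X := (D_space A).
Local Notation leX := (@D_le d A).
Local Notation fX := (D_op HA).

Lemma fX_pos f (x : X) : sgn f -> forall a, sval (fX f x) a = sval x (fA f a).
Proof. by move=> sf a; rewrite /= /D_op_fun sf. Qed.

Lemma fX_neg f (x : X) : ~~ sgn f -> forall a, sval (fX f x) a = ~~ sval x (fA f a).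
Proof. by move=> sf a; rewrite /= /D_op_fun (negbTE sf). Qed.

Lemma one_3a (sp : semi_primal fA) (S : set X) :
  substructure fX S -> S <> set0 -> S = setT.
Proof.
move=> [_ Sf] ne.
pose Sig := finset (fun p : A * A => `[< forall x : X, S x -> sval x p.1 = sval x p.2 >]).
have inSig p : p \in Sig <-> (forall x : X, S x -> sval x p.1 = sval x p.2).
  by rewrite inE; split => /asboolP.
have sub : is_subalg2 fA Sig.
  split.
  - by apply/inSig.
  - by apply/inSig.
  - move=> p q /inSig hp /inSig hq; apply/inSig => x Sx /=.
    by case: (hom_of x) => _ _ hM _; rewrite !hM (hp x Sx) (hq x Sx).
  - move=> p q /inSig hp /inSig hq; apply/inSig => x Sx /=.
    by case: (hom_of x) => _ _ _ hJ; rewrite !hJ (hp x Sx) (hq x Sx).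
  - move=> f p /inSig hp; apply/inSig => x Sx /=.
    have := hp _ (Sf f x Sx); case sf : (sgn f).
      by rewrite !fX_pos ?sf.
    by rewrite !fX_neg ?sf // => /negb_inj.
have /set0P [x0 Sx0] : S != set0 by apply/eqP.
case: sp => _ /(_ Sig sub) [[B [C [sB sC eS]]] | [B [sB eS]]].
- have : (Order.top, Order.bottom) \in Sig.
    by rewrite eS; apply/setXP; split; [case: sB|case: sC].
  move/inSig => /(_ x0 Sx0) /=.
  by case: (hom_of x0) => -> -> _ _.
- apply/seteqP; split => [//|z _]; apply: contrapT => nSz.
  have [a1 H1] := repX (fun y => leX z y)
    (fun u v (zu : leX z u) uv a h => uv a (zu a h)).
  have [a2 H2] : exists a, forall y : X, sval y a <-> (leX z y /\ y <> z).
    apply: repX.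
    move=> u v [zu nuz] uv; split; first by move=> a h; apply: uv; apply: zu.
    move=> e; subst v; apply: nuz; exact: D_le_anti.
  have : (a1, a2) \in Sig.
    apply/inSig => x Sx.
    have nxz : x <> z by move=> e; subst x.
    apply/idP/idP.
      by move/H1 => zx; apply/H2.
    by move/H2 => [zx _]; apply/H1.
  rewrite eS => /imsetP [b _ e]; case: e => e1 e2.
  have : sval z a1 by apply/H1 => a h.
  by rewrite e1 -e2 => /H2 [_].
Qed.

Section OneTwo.
Variables (Y : topologicalType) (leY : Y -> Y -> Prop) (fY : F -> Y -> Y).
Hypothesis cY : cornish_space sgn leY fY.
Variables phi1 phi2 : X -> Y.
Hypotheses (m1 : cornish_morphism leX fX leY fY phi1)
  (m2 : cornish_morphism leX fX leY fY phi2).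

Definition clup (U : set Y) := [/\ open U, closed U & up_set leY U].

Definition PP (p : A * A) := exists U, clup U /\
  (forall x : X, sval x p.1 <-> U (phi1 x)) /\ (forall x : X, sval x p.2 <-> U (phi2 x)).

Definition SS : {set A * A} := finset (fun p => `[< PP p >]).

Lemma inSS p : p \in SS <-> PP p.
Proof. by rewrite inE; split => /asboolP. Qed.

Lemma SS_subalg : is_subalg2 fA SS.
Proof.
case: cY => -[[reflY transY antiY] _ _] opsY.
case: m1 => _ mon1 com1; case: m2 => _ mon2 com2.
split.
- apply/inSS; exists setT; split; first by split; [exact: openT|exact: closedT|by []].
  by split => x /=; case: (hom_of x) => -> _ _ _.
- apply/inSS; exists set0; split; first by split; [exact: open0|exact: closed0|by move=> ? ? []].
  by split => x /=; case: (hom_of x) => _ -> _ _.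
- move=> p q /inSS [U [[oU cU uU] [U1 U2]]] /inSS [V [[oV cV uV] [V1 V2]]].
  apply/inSS; exists (U `&` V); split.
    split; [exact: openI|exact: closedI|].
    by move=> u v [Uu Vu] uv; split; [apply: uU uv|apply: uV uv].
  split => x /=; case: (hom_of x) => _ _ -> _.
  + by rewrite -U1 -V1; split => [/andP[]|[->->]].
  + by rewrite -U2 -V2; split => [/andP[]|[->->]].
- move=> p q /inSS [U [[oU cU uU] [U1 U2]]] /inSS [V [[oV cV uV] [V1 V2]]].
  apply/inSS; exists (U `|` V); split.
    split; [exact: openU|exact: closedU|].
    by move=> u v [Uu|Vu] uv; [left; apply: uU uv|right; apply: uV uv].
  split => x /=; case: (hom_of x) => _ _ _ ->.
  + by rewrite -U1 -V1; split => [/orP[]|[]->]; [left|right| |rewrite orbT].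
  + by rewrite -U2 -V2; split => [/orP[]|[]->]; [left|right| |rewrite orbT].
- move=> f p /inSS [U [[oU cU uU] [U1 U2]]].
  have [cf mf] := opsY f.
  case sf: (sgn f) in mf.
  + apply/inSS; exists (fY f @^-1` U); split.
      split; [exact: cont_open|exact: cont_closed|].
      by move=> u v Uu uv; apply: uU Uu (mf _ _ uv).
    split => x /=.
    * by rewrite -fX_pos ?sf // U1 com1.
    * by rewrite -fX_pos ?sf // U2 com2.
  + apply/inSS; exists (~` (fY f @^-1` U)); split.
      split.
      * by rewrite openC; exact: cont_closed.
      * by rewrite closedC; exact: cont_open.
      * by move=> u v nUu uv Uv; apply: nUu; exact: uU _ _ Uv (mf _ _ uv).
    split => x /=.
    * have := U1 (fX f x); rewrite com1 (fX_neg f x (negbT sf) p.1) => h.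
      split => [H1 HU|H1]; first by have /negP := proj2 h HU.
      by apply/negPn/negP => nx; apply: H1; exact: (proj1 h nx).
    * have := U2 (fX f x); rewrite com2 (fX_neg f x (negbT sf) p.2) => h.
      split => [H1 HU|H1]; first by have /negP := proj2 h HU.
      by apply/negPn/negP => nx; apply: H1; exact: (proj1 h nx).
Qed.

Lemma one_two (sp : semi_primal fA) (js : jointly_surjective phi1 phi2) :
  order_disjoint_union leY (phi1 @` setT) (phi2 @` setT) \/ phi1 = phi2.
Proof.
case: (m1) => _ mon1 _; case: (m2) => _ mon2 _.
case: (sp) => _ /(_ SS SS_subalg) [[B [C [sB sC eS]]] | [B [sB eS]]].
- left.
  have tb : (Order.top, Order.bottom) \in SS.
    by rewrite eS; apply/setXP; split; [case: sB|case: sC].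
  have bt : (Order.bottom, Order.top) \in SS.
    by rewrite eS; apply/setXP; split; [case: sB|case: sC].
  move/inSS: tb => [U [[_ _ uU] [U1 U2]]].
  move/inSS: bt => [V [[_ _ uV] [V1 V2]]].
  have inU x : U (phi1 x) by apply/U1; case: (hom_of x) => ->.
  have ninU x : ~ U (phi2 x) by move/U2; case: (hom_of x) => _ ->.
  have inV x : V (phi2 x) by apply/V2; case: (hom_of x) => ->.
  have ninV x : ~ V (phi1 x) by move/V1; case: (hom_of x) => _ ->.
  split.
  + apply/seteqP; split => // y [[x _ e1] [x' _ e2]]; apply: (ninU x').
    by rewrite e2 -e1; exact: inU.
  + exact: js.
  + move=> y1 y2 [x _ <-] [x' _ <-]; split => le.
      by apply: (ninU x'); exact: uU _ _ (inU x) le.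
    by apply: (ninV x); exact: uV _ _ (inV x') le.
- right; apply: funext => x.
  have key : forall U, clup U -> (U (phi1 x) <-> U (phi2 x)).
    move=> U [oU cU uU].
    have [a1 H1] := repX (fun z => U (phi1 z)) (fun u v Uu uv => uU _ _ Uu (mon1 _ _ uv)).
    have [a2 H2] := repX (fun z => U (phi2 z)) (fun u v Uu uv => uU _ _ Uu (mon2 _ _ uv)).
    have : (a1, a2) \in SS by apply/inSS; exists U; split => //.
    rewrite eS => /imsetP [b _ e]; case: e => e1 e2.
    by rewrite -H1 -H2 e1 e2.
  case: cY => -[[_ _ antiY] _ sepY] _.
  apply: contrapT => ne.
  have : ~ leY (phi1 x) (phi2 x) \/ ~ leY (phi2 x) (phi1 x).
    case: (pselect (leY (phi1 x) (phi2 x))) => h1; last by left.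
    by right => h2; apply: ne; exact: antiY.
  case=> /sepY [U [oU cU uU Ux nUy]]; apply: nUy.
    exact: (proj1 (key U (And3 oU cU uU)) Ux).
  exact: (proj2 (key U (And3 oU cU uU)) Ux).
Qed.

End OneTwo.
Lemma maj : has_majority_term fA.
Proof.
exists (tJoin (tJoin (tMeet (tVar _ 0) (tVar _ 1)) (tMeet (tVar _ 1) (tVar _ 2)))
          (tMeet (tVar _ 0) (tVar _ 2))) => x y /=.
split; rewrite ?meetxx; apply: le_anti; rewrite !leUx ?leIl ?leIr ?lexx ?andbT //=.
- by apply: lexUl; apply: lexUl.
- exact: lexUr.
- by apply: lexUl; apply: lexUr.
Qed.

Section Cons.
Variable S : {set A * A}.
Hypothesis HS : is_subalg2 fA S.

Definition rho (b : bool) (x : X) : {ffun A * A -> bool} :=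
  [ffun p => (p \in S) && sval x (if b then p.1 else p.2)].

Definition Ypred : pred {ffun A * A -> bool} :=
  fun g => `[< exists b x, g = rho b x >].

Definition Ycar := {g : {ffun A * A -> bool} | Ypred g}.
Definition Yt : topologicalType := discrete_topology Ycar.

Definition leYt (u v : Yt) : Prop := forall p, sval u p -> sval v p.

Definition Fop f (g : {ffun A * A -> bool}) : {ffun A * A -> bool} :=
  [ffun p => (p \in S) && (if sgn f then g (fA f p.1, fA f p.2) else ~~ g (fA f p.1, fA f p.2))].

Lemma Fop_rho f b x : Fop f (rho b x) = rho b (fX f x).
Proof.
case: HS => _ _ _ _ Hf.
apply/ffunP => p; rewrite !ffunE; case pS: (p \in S) => //=.
rewrite (Hf f p pS) /=.
by rewrite /D_op_fun; case: b; case: (sgn f).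
Qed.

Lemma rho_mem b x : Ypred (rho b x).
Proof. by apply/asboolP; exists b, x. Qed.

Lemma Fop_mem f (u : Ycar) : Ypred (Fop f (sval u)).
Proof.
case: u => g /= /asboolP [b [x ->]]; apply/asboolP; exists b, (fX f x).
exact: Fop_rho.
Qed.

Definition fYt f (u : Yt) : Yt := exist _ (Fop f (sval u)) (Fop_mem f u).
Definition phiY b (x : X) : Yt := exist _ (rho b x) (rho_mem b x).

Lemma Yt_open (U : set Yt) : open U.
Proof. exact: discrete_open. Qed.

Lemma Yt_closed (U : set Yt) : closed U.
Proof. exact: discrete_closed. Qed.

Lemma Yt_cont (f : Yt -> Yt) : continuous f.
Proof. by apply/continuousP => B _; exact: Yt_open. Qed.

Lemma Yt_cornish : cornish_space sgn leYt fYt.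
Proof.
split.
  split.
  - split.
    + by move=> u p.
    + by move=> u v w uv vw p /uv /vw.
    + move=> u v uv vu; apply: val_inj; apply/ffunP => p.
      by apply/idP/idP; [apply: uv|apply: vu].
  - apply: finite_compact; exact: (@finite_finset Ycar).
  - move=> u v nuv; exists [set w | leYt u w]; split => //.
    + exact: Yt_open.
    + exact: Yt_closed.
    + by move=> w1 w2 uw1 w12 p /uw1 /w12.
move=> f; split; first exact: Yt_cont.
case sf: (sgn f) => u v uv p /=; rewrite !ffunE sf; case: (p \in S) => //=.
  exact: uv.
by apply: contra => /uv.
Qed.

Lemma phi_morph b : cornish_morphism leX fX leYt fYt (phiY b).
Proof.
split.
- by apply/continuousP => B _; exact: D_open.
- move=> u v uv p /=; rewrite !ffunE => /andP [-> /uv] //.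
- by move=> f x; apply: val_inj; rewrite /= Fop_rho.
Qed.

Lemma phi_js : jointly_surjective (phiY true) (phiY false).
Proof.
apply/seteqP; split => // -[g Hg] _.
have /asboolP [b [x e]] := Hg.
have -> : exist _ g Hg = phiY b x :> Yt by apply: val_inj; rewrite /= e.
by case: b {e}; [left|right]; exists x.
Qed.

Lemma phi_eq : phiY true = phiY false ->
  exists B : {set A}, is_subalg fA B /\ S = [set (b, b) | b in B]%SET.
Proof.
move=> e.
have h (x : X) p : p \in S -> sval x p.1 = sval x p.2.
  move=> pS; have := congr1 (fun phi : X -> Yt => sval (phi x) p) e.
  by rewrite /= !ffunE pS.
case: HS => HT HB HM HJ Hf.
exists [set a | (a, a) \in S]%SET; split.
- split; rewrite ?inE //.
  + by move=> a b; rewrite !inE => ha hb; exact: (HM _ _ ha hb).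
  + by move=> a b; rewrite !inE => ha hb; exact: (HJ _ _ ha hb).
  + by move=> f a; rewrite !inE => ha; exact: (Hf f _ ha).
- apply/setP => -[a c]; apply/idP/imsetP.
  + move=> pS; have ac : a = c.
      apply: sep_eq => y hy; exact: (h (exist _ y (mem_set hy)) _ pS).
    by subst c; exists a; rewrite ?inE.
  + by case=> b; rewrite inE => bS [-> ->].
Qed.

Lemma corner (disj : order_disjoint_union leYt (phiY true @` setT) (phiY false @` setT))
  (b : bool) : exists s, s \in S /\ (forall x : X, sval x (if b then s.1 else s.2)) /\
     (forall x : X, ~~ sval x (if b then s.2 else s.1)).
Proof.
case: disj => i12 _ nc.
case: (HS) => HT HB HM HJ Hf.
pose G := [set g : A * A -> bool | exists b' x, forall p, g p = rho b' x p].
pose W := [set g : A * A -> bool | exists x, forall p, g p = rho b x p].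
have HG : forall g, G g -> @homS (A * A)%type
   (fun p q => (Order.meet p.1 q.1, Order.meet p.2 q.2))
   (fun p q => (Order.join p.1 q.1, Order.join p.2 q.2))
   (Order.top, Order.top) (Order.bottom, Order.bottom) (mem S) g.
  move=> g [b' [x eg]]; case: (hom_of x) => xT xB xM xJ.
  split; rewrite ?eg ?ffunE.
  - by rewrite HT; case: (b').
  - by rewrite HB; case: (b') => /=; rewrite xB.
  - move=> s t sS tS; rewrite !eg !ffunE (HM _ _ sS tS) (_ : s \in S) // (_ : t \in S) //.
    by case: (b') => /=; rewrite xM.
  - move=> s t sS tS; rewrite !eg !ffunE (HJ _ _ sS tS) (_ : s \in S) // (_ : t \in S) //.
    by case: (b') => /=; rewrite xJ.
have HW : W `<=` G by move=> g [x eg]; exists b, x.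
have Hup : forall g h, W g -> G h -> (forall s, (mem S) s -> g s -> h s) -> W h.
  move=> g h [x eg] [b' [x' eh]] gh.
  have [ebb|nb] := eqVneq b' b; first by exists x' => p; rewrite eh ebb.
  exfalso.
  have le : leYt (phiY b x) (phiY b' x').
    move=> p /=; rewrite -eg -eh; case pS : (p \in S); first exact: gh.
    by rewrite eg ffunE pS.
  move: le nb; clear W HW eg eh; case: b; case: b' => le nb //.
    by have [n1 _] := nc _ _ (ex_intro2 _ _ x I erefl) (ex_intro2 _ _ x' I erefl); apply: n1.
  by have [_ n2] := nc _ _ (ex_intro2 _ _ x' I erefl) (ex_intro2 _ _ x I erefl); apply: n2.
have [s [sS Hs]] := @rep (A * A)%type _ _ _ _ (mem S) HT HB HM HJ G W HG HW Hup.
have sS' : s \in S := sS.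
exists s; split => //; split => x.
- have := proj2 (Hs (rho b x) (ex_intro _ b (ex_intro _ x (fun p => erefl))))
    (ex_intro _ x (fun p => erefl)).
  by rewrite ffunE sS'.
- apply/negP => hx.
  have : W (rho (~~ b) x).
    apply: (proj1 (Hs (rho (~~ b) x) (ex_intro _ (~~ b) (ex_intro _ x (fun p => erefl))))).
    by rewrite ffunE sS'; case: (b) hx.
  move=> [x' ex'].
  have e : phiY (~~ b) x = phiY b x'.
    by apply: val_inj; apply/ffunP => p; rewrite /= ex'.
  case: (b) e => /= e.
    have : (phiY true @` setT `&` phiY false @` setT) (phiY true x').
      by split; [exists x'|exists x].
    by rewrite i12.
  have : (phiY true @` setT `&` phiY false @` setT) (phiY true x).
    by split; [exists x|exists x'].
  by rewrite i12.
Qed.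

Lemma phi_disj : order_disjoint_union leYt (phiY true @` setT) (phiY false @` setT) ->
  exists B C : {set A}, [/\ is_subalg fA B, is_subalg fA C & S = finset.setX B C].
Proof.
move=> disj.
case: (HS) => HT HB HM HJ Hf.
have [[u v] [s1S [h1 h1']]] := corner disj true.
have [[u' v'] [s2S [h2 h2']]] := corner disj false.
have eu : u = Order.top.
  by apply: sep_top => y hy; exact: (h1 (exist _ y (mem_set hy))).
have ev : v = Order.bottom.
  by apply: sep_bot => y hy; exact: (h1' (exist _ y (mem_set hy))).
have ev' : v' = Order.top.
  by apply: sep_top => y hy; exact: (h2 (exist _ y (mem_set hy))).
have eu' : u' = Order.bottom.
  by apply: sep_bot => y hy; exact: (h2' (exist _ y (mem_set hy))).
subst u v u' v'.
exists [set a | [exists c, (a, c) \in S]]%SET, [set c | [exists a, (a, c) \in S]]%SET.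
split.
- split; rewrite ?inE.
  + by apply/existsP; exists Order.top.
  + by apply/existsP; exists Order.bottom.
  + move=> a a'; rewrite !inE => /existsP [c hc] /existsP [c' hc'].
    by apply/existsP; exists (Order.meet c c'); exact: (HM _ _ hc hc').
  + move=> a a'; rewrite !inE => /existsP [c hc] /existsP [c' hc'].
    by apply/existsP; exists (Order.join c c'); exact: (HJ _ _ hc hc').
  + move=> f a; rewrite !inE => /existsP [c hc].
    by apply/existsP; exists (fA f c); exact: (Hf f _ hc).
- split; rewrite ?inE.
  + by apply/existsP; exists Order.top.
  + by apply/existsP; exists Order.bottom.
  + move=> a a'; rewrite !inE => /existsP [c hc] /existsP [c' hc'].
    by apply/existsP; exists (Order.meet c c'); exact: (HM _ _ hc hc').
  + move=> a a'; rewrite !inE => /existsP [c hc] /existsP [c' hc'].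
    by apply/existsP; exists (Order.join c c'); exact: (HJ _ _ hc hc').
  + move=> f a; rewrite !inE => /existsP [c hc].
    by apply/existsP; exists (fA f c); exact: (Hf f _ hc).
- apply/setP => -[a c]; rewrite !inE; apply/idP/andP.
    by move=> h; split; apply/existsP; [exists c|exists a].
  case => /existsP [c1 hc1] /existsP [a2 ha2].
  have := HJ _ _ (HM _ _ hc1 s1S) (HM _ _ ha2 s2S).
  by rewrite /= !meetx1 !meetx0 joinx0 join0x.
Qed.

End Cons.

Lemma main_equiv :
  let X := D_space A in
  let leX := @D_le d A in
  let fX := D_op HA in
  (semi_primal fA <->
   (forall (Y : topologicalType) (leY : Y -> Y -> Prop) (fY : F -> Y -> Y),
      cornish_space sgn leY fY ->
      forall phi1 phi2 : X -> Y,
        cornish_morphism leX fX leY fY phi1 ->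
        cornish_morphism leX fX leY fY phi2 ->
        jointly_surjective phi1 phi2 ->
        order_disjoint_union leY (phi1 @` setT) (phi2 @` setT) \/ phi1 = phi2))
  /\
  (semi_primal fA <->
   ((forall S : set X, substructure fX S -> S <> set0 -> S = setT) /\
    (forall (Y : topologicalType) (leY : Y -> Y -> Prop) (fY : F -> Y -> Y),
      cornish_space sgn leY fY ->
      forall phi1 phi2 : X -> Y,
        cornish_morphism leX fX leY fY phi1 ->
        cornish_morphism leX fX leY fY phi2 ->
        jointly_surjective phi1 phi2 ->
        (exists a b : X, order_comparable leY (phi1 a) (phi2 b)) ->
        exists c : X, phi1 c = phi2 c))).
Proof.
move=> X0 leX0 fX0; split; split.
- move=> sp Y leY fY cY phi1 phi2 m1 m2 js; exact: (@one_two Y leY fY cY phi1 phi2 m1 m2 sp js).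
- move=> H2; split; first exact: maj.
  move=> S HS.
  case: (H2 _ _ _ (Yt_cornish S HS) _ _ (phi_morph S HS true) (phi_morph S HS false) (phi_js S)).
    by move=> disj; left; exact: (phi_disj S HS disj).
  by move=> e; right; exact: (phi_eq S HS e).
- move=> sp; split; first by move=> S; exact: (one_3a sp).
  move=> Y leY fY cY phi1 phi2 m1 m2 js [a [b cab]].
  case: (@one_two Y leY fY cY phi1 phi2 m1 m2 sp js) => [[_ _ nc]|e]; last by exists a; rewrite e.
  have [n1 n2] := nc _ _ (ex_intro2 _ _ a I erefl) (ex_intro2 _ _ b I erefl).
  by case: cab.
- move=> [H3a H3b]; split; first exact: maj.
  move=> S HS.
  have [reflY _ _] : partial_order (@leYt S).
    by case: (Yt_cornish S HS) => -[].
  case: (pselect (exists a b : X, order_comparable (@leYt S) (phiY S true a) (phiY S false b))).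
  + move=> ex; right; apply: (phi_eq S HS).
    have [c ec] := H3b _ _ _ (Yt_cornish S HS) _ _ (phi_morph S HS true) (phi_morph S HS false)
      (phi_js S) ex.
    have E := H3a [set z | phiY S true z = phiY S false z].
    have : [set z | phiY S true z = phiY S false z] = setT.
      apply: E; last by apply/eqP/set0P; exists c.
      split; first exact: D_closed.
      move=> f z /= ez.
      case: (phi_morph S HS true) => _ _ ->; case: (phi_morph S HS false) => _ _ ->.
      by rewrite ez.
    move=> Eall; apply: funext => z.
    by have : [set z | phiY S true z = phiY S false z] z by rewrite Eall.
  + move=> nex; left; apply: (phi_disj S HS); split.
    * apply/seteqP; split => // y [[a _ ea] [b _ eb]]; apply: nex.
      by exists a, b; left; rewrite ea eb; exact: reflY.
    * exact: phi_js S.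
    * move=> y1 y2 [a _ <-] [b _ <-]; split => h; apply: nex; exists a, b.
        by left.
      by right.
Qed.

End Main.

Theorem theorem5p9 (d : Order.disp_t) (A : finTBDistrLatticeType d)
  (F : Type) (sgn : F -> bool) (fA : F -> A -> A) (HA : cornish_alg sgn fA) :
  let X := D_space A in
  let leX := @D_le d A in
  let fX := D_op HA in
  (semi_primal fA <->
   (forall (Y : topologicalType) (leY : Y -> Y -> Prop) (fY : F -> Y -> Y),
      cornish_space sgn leY fY ->
      forall phi1 phi2 : X -> Y,
        cornish_morphism leX fX leY fY phi1 ->
        cornish_morphism leX fX leY fY phi2 ->
        jointly_surjective phi1 phi2 ->
        order_disjoint_union leY (phi1 @` setT) (phi2 @` setT) \/ phi1 = phi2))
  /\
  (semi_primal fA <->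
   ((forall S : set X, substructure fX S -> S <> set0 -> S = setT) /\
    (forall (Y : topologicalType) (leY : Y -> Y -> Prop) (fY : F -> Y -> Y),
      cornish_space sgn leY fY ->
      forall phi1 phi2 : X -> Y,
        cornish_morphism leX fX leY fY phi1 ->
        cornish_morphism leX fX leY fY phi2 ->
        jointly_surjective phi1 phi2 ->
        (exists a b : X, order_comparable leY (phi1 a) (phi2 b)) ->
        exists c : X, phi1 c = phi2 c))).
Proof. exact: main_equiv. Qed.
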